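(* Let $n\ge3$ and $0<t\le s\le1$. There exist $\epsilon=\epsilon(s,n,K)\in(0,\tfrac12]$ and $\bar\delta_0=\bar\delta_0(\epsilon)\in(0,\tfrac12]$ such that the following holds for all $\delta\in(0,\bar\delta_0]$. Let $F\subset C^2([0,1]^{n-1},[0,1])$ be a finite $\delta$-separated cinematic family with cinematic constant $K$ which is a $(\delta,t,\delta^{-2\epsilon})$-set with $\tfrac12\delta^{2\epsilon-t}\le|F|\le\delta^{-t}$ and $\|f\|_{C^2([0,1]^{n-1})}\le K$ for all $f\in F$, and for each $f\in F$ let $E(f)\subset\mathrm{graph}(f)$ be a finite $\delta$-separated $(\delta,n-2+s,\delta^{-2\epsilon})$-set with $|E(f)|=M$, where $\delta^{2\epsilon-(n-2+s)}\le M\le\delta^{-(n-2+s)}$. Then for every $f\in F$, the projection $P_{E(f)}$ of $E(f)$ onto the first $n-1$ coordinates is a $(\delta,n-2+s,\delta^{-3\epsilon})$-set.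
   Context: $|A|$ is cardinality and $|A|_\delta$ the $\delta$-covering number. A bounded set $P$ in a metric space $X$ is a $(\delta,\sigma,C)$-set if $|P\cap B(x,r)|_\delta\le Cr^\sigma|P|_\delta$ for all $x\in X$, $r\ge\delta$; for subsets of $C^2([0,1]^{n-1},[0,1])$ the metric is the $C^2$-norm metric. Cinematic family: for a domain $U\subset\mathbb{R}^k$, $F\subset C^2(U)$ is a cinematic family with cinematic constant $K$, doubling constant $D$ and modulus of continuity $\alpha$ if: (1) $F$ lies in a ball of diameter $K$ in $C^2(U)$; (2) $F$ is doubling with constant at most $D$; (3) for all $f,g\in F$ and $\xi\in S^{k-1}$, $\inf_{x\in U}\{|f-g|(x)+|\nabla f-\nabla g|(x)+|\nabla_\xi\nabla_\xi(f-g)(x)|\}\ge K^{-1}\|f-g\|_{C^2(U)}$, with $\nabla_\xi\nabla_\xi h=\langle\nabla^2h\,\xi,\xi\rangle$; (4) there is an increasing continuous $\alpha:[0,1]\to[0,\infty)$, $\alpha(0)=0$, $0<\alpha(s)\le K^{-1}s$ for $s\in(0,1]$, such that for all $f,g\in F$, $\xi\in S^{k-1}$, sufficiently small $\eta>0$ and $x,y\in U$ with $|x-y|\le\alpha(\eta)$: $|\nabla_\xi\nabla_\xi(f-g)(x)-\nabla_\xi\nabla_\xi(f-g)(y)|\le\eta$. *)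

(* Defs.v *)
From HB Require Import structures.
From mathcomp Require Import all_boot all_order all_algebra.
From mathcomp Require Import all_classical all_reals all_analysis.
Set Implicit Arguments. Unset Strict Implicit. Unset Printing Implicit Defensive.
Import Order.TTheory GRing.Theory Num.Theory.
Import numFieldNormedType.Exports.
Local Open Scope classical_set_scope.
Local Open Scope ring_scope.

Section Defs.
Variable R : realType.

Definition eucl_norm k (v : 'rV[R]_k) : R := Num.sqrt (\sum_(i < k) v 0 i ^+ 2).
Definition eucl_dist k (x y : 'rV[R]_k) : R := eucl_norm (x - y).
Definition eucl_dot k (u v : 'rV[R]_k) : R := \sum_(i < k) u 0 i * v 0 i.
Definition usphere k : set 'rV[R]_k := [set xi | eucl_norm xi = 1].
Definition ebasis k (i : 'I_k) : 'rV[R]_k := \row_(j < k) (i == j)%:R.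
Definition cube k : set 'rV[R]_k := [set x | forall i, 0 <= x 0 i <= 1].

Definition cover_by T (X : set T) (d : T -> T -> R) (A : set T) (delta : R)
  (N : nat) : Prop :=
  exists c : 'I_N -> T, (forall i, X (c i)) /\
    (forall a, A a -> exists i, d (c i) a <= delta).
Definition covnum T (X : set T) (d : T -> T -> R) (A : set T) (delta : R) : R :=
  inf [set r : R | exists N, r = N%:R /\ cover_by X d A delta N].
Definition dcball T (d : T -> T -> R) (x : T) (r : R) : set T := [set y | d x y <= r].
Definition dbounded T (d : T -> T -> R) (P : set T) : Prop :=
  exists x0 r0, P `<=` dcball d x0 r0.
Definition dsC_set T (X : set T) (d : T -> T -> R) (P : set T)
  (delta sigma C : R) : Prop :=
  P `<=` X /\ dbounded d P /\
  forall x r, X x -> delta <= r ->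
    covnum X d (P `&` dcball d x r) delta <= C * r `^ sigma * covnum X d P delta.
Definition dseparated T (d : T -> T -> R) (P : set T) (delta : R) : Prop :=
  forall x y, P x -> P y -> x <> y -> delta <= d x y.

Definition pderiv k (h : 'rV[R]_k -> R) (i : 'I_k) : 'rV[R]_k -> R :=
  fun x => 'D_(ebasis i) h x.
Definition grad k (h : 'rV[R]_k -> R) (x : 'rV[R]_k) : 'rV[R]_k :=
  \row_(i < k) pderiv h i x.
Definition hess k (h : 'rV[R]_k -> R) (i j : 'I_k) : 'rV[R]_k -> R :=
  pderiv (pderiv h i) j.
Definition dxixi k (h : 'rV[R]_k -> R) (xi x : 'rV[R]_k) : R :=
  \sum_(i < k) \sum_(j < k) hess h i j x * xi 0 i * xi 0 j.
Definition C2 k (h : 'rV[R]_k -> R) : Prop :=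
  exists O : set 'rV[R]_k, open O /\ @cube k `<=` O /\
    forall x, O x ->
      [/\ differentiable h x,
          (forall i, differentiable (pderiv h i) x) &
          (forall i j, {for x, continuous (hess h i j)})].
Definition C2norm k (h : 'rV[R]_k -> R) : R :=
  sup [set r : R | exists x, @cube k x /\
        r = Num.max `|h x|
              (Num.max (\big[Num.max/0]_(i < k) `|pderiv h i x|)
                       (\big[Num.max/0]_(i < k) \big[Num.max/0]_(j < k)
                                `|hess h i j x|))].
Definition C2dist k (f g : 'rV[R]_k -> R) : R := C2norm (fun x => f x - g x).
Definition C2X k : set ('rV[R]_k -> R) :=
  [set f | C2 f /\ forall x, @cube k x -> 0 <= f x <= 1].

Definition doubling k (F : set ('rV[R]_k -> R)) (D : R) : Prop :=
  forall f r, F f -> 0 < r ->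
    exists N, N%:R <= D /\
      cover_by F (@C2dist k) (F `&` dcball (@C2dist k) f r) (r / 2) N.
Definition cinematic k (F : set ('rV[R]_k -> R)) (K D : R) (alpha : R -> R) : Prop :=
  [/\ F `<=` (@C2 k),
      exists g, C2 g /\ forall f, F f -> C2dist f g <= K / 2,
      doubling F D,
      (forall f g xi, F f -> F g -> @usphere k xi ->
        forall x, @cube k x ->
          K^-1 * C2dist f g <=
          `|f x - g x| + eucl_norm (grad f x - grad g x)
            + `|dxixi (fun y => f y - g y) xi x|) &
      [/\ {in `[0, 1] &, {homo alpha : a b / a <= b}},
          {within `[0, 1], continuous alpha},
          alpha 0 = 0,
          (forall a, 0 < a <= 1 -> 0 < alpha a <= K^-1 * a) &
          (forall f g xi, F f -> F g -> @usphere k xi ->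
            exists eta0, 0 < eta0 <= 1 /\
            forall eta, 0 < eta <= eta0 -> forall x y, @cube k x -> @cube k y ->
              eucl_dist x y <= alpha eta ->
              `|dxixi (fun z => f z - g z) xi x
                - dxixi (fun z => f z - g z) xi y| <= eta)]].

Definition graphf k (f : 'rV[R]_k -> R) : set 'rV[R]_(k + 1) :=
  [set row_mx x (\row_(j < 1) f x) | x in @cube k].
Definition projf k (p : 'rV[R]_(k + 1)) : 'rV[R]_k := lsubmx p.

End Defs.

(* Main.v *)
Require Import Defs.
From HB Require Import structures.
From mathcomp Require Import all_boot all_order all_algebra.
From mathcomp Require Import all_classical all_reals all_analysis.
From mathcomp Require Import ring lra.
Set Implicit Arguments. Unset Strict Implicit. Unset Printing Implicit Defensive.
Import Order.TTheory GRing.Theory Num.Theory.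
Import numFieldNormedType.Exports.
Local Open Scope classical_set_scope.
Local Open Scope ring_scope.

Section Cov.
Variable R : realType.

Lemma covnum_lb0 T (X : set T) (d : T -> T -> R) A delta :
  has_lbound [set r : R | exists N, r = N%:R /\ cover_by X d A delta N].
Proof. by exists 0 => r [N [-> _]]. Qed.

Lemma covnum_le T (X : set T) (d : T -> T -> R) A delta N :
  cover_by X d A delta N -> covnum X d A delta <= N%:R.
Proof.
move=> H; rewrite /covnum; have := ge_inf (covnum_lb0 X d A delta).
by apply; exists N.
Qed.

Lemma covnum_ge T (X : set T) (d : T -> T -> R) A delta b :
  (exists N, cover_by X d A delta N) ->
  (forall N, cover_by X d A delta N -> b <= N%:R) -> b <= covnum X d A delta.
Proof.
move=> [N0 H0] H; apply: lb_le_inf; first by exists N0%:R, N0.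
by move=> r [N [-> HN]]; exact: H.
Qed.

Lemma covnum_ge0 T (X : set T) (d : T -> T -> R) A delta :
  (exists N, cover_by X d A delta N) -> 0 <= covnum X d A delta.
Proof. by move=> H; apply: covnum_ge => // N _; rewrite ler0n. Qed.

Lemma cover_fin T (X : set T) (d : T -> T -> R) A delta (I : finType) (c : I -> T) :
  (forall i, X (c i)) -> (forall a, A a -> exists i, d (c i) a <= delta) ->
  cover_by X d A delta #|I|.
Proof.
move=> HX HA; exists (fun j => c (enum_val j)); split => // a /HA [i Hi].
by exists (enum_rank i); rewrite enum_rankK.
Qed.

Lemma finite_cover T (X : set T) (d : T -> T -> R) (A : set T) delta M :
  (A #= `I_M)%card -> A `<=` X -> (forall a, d a a <= delta) ->
  cover_by X d A delta M.
Proof.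
move=> /card_esym /card_bijP [f [g fg gf]] AX dd.
have HI (i : 'I_M) : (i : nat) \in `I_M by apply: mem_set => /=.
exists (fun i => val (f (exist _ (val i) (HI i)))); split.
  by move=> i; apply: AX; have := valP (f (exist _ (val i) (HI i))); rewrite inE.
move=> a Aa; have Aa' : a \in A by apply: mem_set.
set y := g (exist _ a Aa').
have yM : (val y < M)%N by have := valP y; rewrite inE.
exists (Ordinal yM) => /=.
have -> : exist _ (val y) (HI (Ordinal yM)) = y by apply: val_inj.
by rewrite gf /=.
Qed.

End Cov.

Section Eucl.
Variable R : realType.
Implicit Types k : nat.

Definition l1 k (v : 'rV[R]_k) : R := \sum_(i < k) `|v 0 i|.

Lemma eucl_norm_ge0 k (v : 'rV[R]_k) : 0 <= eucl_norm v.
Proof. exact: sqrtr_ge0. Qed.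

Lemma coord_le_eucl k (v : 'rV[R]_k) j : `|v 0 j| <= eucl_norm v.
Proof.
rewrite /eucl_norm -sqrtr_sqr ler_sqrt; last by apply: sumr_ge0 => i _; exact: sqr_ge0.
by rewrite (bigD1 j) //= lerDl; apply: sumr_ge0 => i _; exact: sqr_ge0.
Qed.

Lemma eucl_le_l1 k (v : 'rV[R]_k) : eucl_norm v <= l1 v.
Proof.
have l0 : 0 <= l1 v by apply: sumr_ge0 => i _.
rewrite /eucl_norm -(ger0_norm l0) -sqrtr_sqr ler_sqrt; last exact: sqr_ge0.
rewrite /l1.
have [] // : 0 <= \sum_(i < k) `|v 0 i| /\ \sum_(i < k) v 0 i ^+ 2 <= (\sum_(i < k) `|v 0 i|) ^+ 2.
apply: (big_ind2 (fun a b => 0 <= b /\ a <= b ^+ 2)).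
- by rewrite expr0n.
- move=> a1 b1 a2 b2 [b10 h1] [b20 h2]; split; first exact: addr_ge0.
  apply: (le_trans (lerD h1 h2)); rewrite sqrrD lerD2r lerDl.
  by apply: mulrn_wge0; apply: mulr_ge0.
- by move=> i _; rewrite real_normK ?num_real //.
Qed.

Lemma eucl_lsub k (v : 'rV[R]_(k + 1)) : eucl_norm (lsubmx v) <= eucl_norm v.
Proof.
rewrite /eucl_norm ler_sqrt; last by apply: sumr_ge0 => i _; exact: sqr_ge0.
rewrite big_split_ord /=.
have -> : \sum_(i < k) lsubmx v 0 i ^+ 2 = \sum_(i < k) v 0 (lshift 1 i) ^+ 2.
  by apply: eq_bigr => i _; rewrite mxE.
by rewrite lerDl; apply: sumr_ge0 => i _; exact: sqr_ge0.
Qed.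

Lemma l1_row_mx k (u : 'rV[R]_k) (w : 'rV[R]_1) :
  l1 (row_mx u w) = l1 u + `|w 0 0|.
Proof.
rewrite /l1 big_split_ord /= big_ord1; congr (_ + _).
  by apply: eq_bigr => i _; rewrite row_mxEl.
by rewrite row_mxEr.
Qed.

Lemma l1_ge0 k (v : 'rV[R]_k) : 0 <= l1 v.
Proof. by apply: sumr_ge0. Qed.

Lemma l1_bound k (v : 'rV[R]_k) (a : R) : (forall j, `|v 0 j| <= a) -> l1 v <= k%:R * a.
Proof.
move=> H; rewrite /l1; apply: (le_trans (ler_sum _ (fun i _ => H i))).
by rewrite sumr_const card_ord mulr_natl.
Qed.

Lemma eucl_dist_sym k (x y : 'rV[R]_k) : eucl_dist x y = eucl_dist y x.
Proof.
rewrite /eucl_dist /eucl_norm -opprB; congr Num.sqrt; apply: eq_bigr => i _.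
by rewrite mxE sqrrN.
Qed.

End Eucl.

Section Lip.
Variable R : realType.
Variable k : nat.

Lemma cont_bigmax (I : Type) (r : seq I) (F : I -> 'rV[R]_k -> R) x :
  (forall i, {for x, continuous (F i)}) ->
  {for x, continuous (fun y => \big[Num.max/0]_(i <- r) F i y)}.
Proof.
move=> H; elim: r => [|a r IH].
  have -> : (fun y => \big[Num.max/0]_(i <- [::]) F i y) = fun=> 0.
    by apply/funext => y; rewrite big_nil.
  exact: cst_continuous.
have -> : (fun y => \big[Num.max/0]_(i <- a :: r) F i y) =
   (fun y => Num.max (F a y) (\big[Num.max/0]_(i <- r) F i y)).
  by apply/funext => y; rewrite big_cons.
exact: (@continuous_max _ _ (F a) (fun y => \big[Num.max/0]_(i <- r) F i y) x (H a) IH).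
Qed.

Definition gC2 (h : 'rV[R]_k -> R) x :=
  Num.max `|h x| (Num.max (\big[Num.max/0]_(i < k) `|pderiv h i x|)
                       (\big[Num.max/0]_(i < k) \big[Num.max/0]_(j < k)
                                `|hess h i j x|)).

Lemma cube_compact : compact (@cube R k).
Proof.
have -> : @cube R k = [set v : 'rV[R]_k | forall i, `[0, 1]%classic (v ord0 i)].
  rewrite predeqE => v; split => /= H i; have := H i; by rewrite /= in_itv.
exact: (@rV_compact R k (fun _ => `[0, 1]%classic) (fun _ => @segment_compact R 0 1)).
Qed.

Lemma gC2_cont h x : C2 h -> cube x -> {for x, continuous (gC2 h)}.
Proof.
move=> [U [oU [cU HU]]] cx; have [dh dp ch] := HU x (cU x cx).
have cn (g : 'rV[R]_k -> R) : {for x, continuous g} -> {for x, continuous (fun y => `|g y|)}.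
  by move=> cg; apply: continuous_comp => //; exact: norm_continuous.
apply: continuous_max; first by apply: cn; exact: differentiable_continuous.
apply: continuous_max.
  by apply: cont_bigmax => i; apply: cn; exact: differentiable_continuous.
by apply: cont_bigmax => i; apply: cont_bigmax => j; apply: cn.
Qed.

Lemma gC2_ub h : C2 h -> has_ubound [set r : R | exists x, @cube R k x /\ r = gC2 h x].
Proof.
move=> Ch.
have cc : compact (gC2 h @` @cube R k).
  apply: continuous_compact; last exact: cube_compact.
  apply: continuous_in_subspaceT => x; rewrite inE => cx; exact: gC2_cont.
have [M [_ HM]] := compact_bounded cc.
have := HM (`|M| + 1); rewrite (le_lt_trans (ler_norm _)) ?ltrDl// => /(_ erefl) aM.
exists (`|M| + 1) => _ [x [cx ->]].
by rewrite (le_trans (ler_norm _))// aM //; exists x.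
Qed.

Lemma pderiv_le_C2norm (h : 'rV[R]_k -> R) x j : C2 h -> cube x -> `|pderiv h j x| <= C2norm h.
Proof.
move=> Ch cx; apply: (@le_trans _ _ (gC2 h x)).
  rewrite /gC2 le_max; apply/orP; right; rewrite le_max; apply/orP; left.
  exact: le_bigmax.
rewrite /C2norm; apply: (ub_le_sup (gC2_ub Ch)).
by exists x.
Qed.

End Lip.

Section Lip2.
Variable R : realType.
Variable k : nat.

Lemma cube_seg (x y : 'rV[R]_k) t : cube x -> cube y -> 0 <= t <= 1 ->
  cube (x + t *: (y - x)).
Proof.
move=> cx cy /andP[t0 t1] j; rewrite !mxE.
have /andP[x0 x1] := cx j; have /andP[y0 y1] := cy j.
apply/andP; split; nra.
Qed.

Lemma derive_line (h : 'rV[R]_k -> R) (x v : 'rV[R]_k) t :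
  let phi := fun s : R => h (x + s *: v) in
  derivable h (x + t *: v) v ->
  is_derive t 1 phi ('D_v h (x + t *: v)).
Proof.
move=> phi dh.
have E : (fun s : R => s^-1 *: ((phi \o shift t) (s *: 1) - phi t)) =
         (fun s : R => s^-1 *: ((h \o shift (x + t *: v)) (s *: v) - h (x + t *: v))).
  apply/funext => s /=; congr (_ *: (_ - _)); rewrite /phi /=; congr h.
  by rewrite scaler1 scalerDl addrCA addrA.
split; rewrite /derivable /derive E //.
Qed.


Lemma ebasis_delta (j : 'I_k) : @ebasis R k j = delta_mx 0 j.
Proof. by apply/rowP => l; rewrite !mxE /= eq_sym. Qed.

Lemma dir_deriv_sum (h : 'rV[R]_k -> R) z (v : 'rV[R]_k) :
  differentiable h z ->
  'D_v h z = \sum_(j < k) v 0 j * pderiv h j z.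
Proof.
move=> dh; rewrite deriveE // {1}(row_sum_delta v) linear_sum.
apply: eq_bigr => j _; rewrite linearZ /= /pderiv deriveE // ebasis_delta.
by [].
Qed.

Lemma lip (h : 'rV[R]_k -> R) K x y : C2 h -> C2norm h <= K ->
  cube x -> cube y -> `|h y - h x| <= K * l1 (y - x).
Proof.
move=> Ch hK cx cy; have [U [oU [cU HU]]] := Ch.
set v := y - x; set phi := fun s : R => h (x + s *: v).
have Hz s : 0 <= s <= 1 -> cube (x + s *: v) by move=> s01; exact: cube_seg.
have Hd (s : R) : s \in `]0, 1[ -> is_derive s 1 phi ('D_v h (x + s *: v)).
  rewrite in_itv /= => /andP[s0 s1]; apply: derive_line; apply: diff_derivable.
  by have [] := HU _ (cU _ (Hz s _)); rewrite ?ltW.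
have Hc : {within `[0, 1], continuous phi}.
  apply: continuous_in_subspaceT => s; rewrite inE /= in_itv /= => s01.
  apply: continuous_comp; last first.
    by have [dh _ _] := HU _ (cU _ (Hz s s01)); exact: differentiable_continuous.
  apply: continuousD; first exact: cst_continuous.
  by apply: continuousZr_tmp.
have [c c01 E] := MVT ltr01 Hd Hc.
have -> : h y - h x = phi 1 - phi 0.
  by rewrite /phi scale1r scale0r addr0 /v addrCA subrr addr0.
rewrite E subr0 mulr1.
have c01' : 0 <= c <= 1 by move: c01; rewrite in_itv /= => /andP[? ?]; rewrite !ltW.
have [dh _ _] := HU _ (cU _ (Hz c c01')).
rewrite dir_deriv_sum //; apply: (le_trans (ler_norm_sum _ _ _)).
rewrite /l1 mulr_sumr; apply: ler_sum => j _; rewrite normrM mulrC.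
apply: ler_wpM2r => //; apply: (le_trans _ hK); exact: pderiv_le_C2norm Ch (Hz c c01').
Qed.

End Lip2.

Section Grid.
Variable R : realType.
Variable m : nat.
Variables (lam delta : R).
Hypothesis lam0 : 0 <= lam.
Hypothesis delta0 : 0 < delta.

Definition gT : nat := (Num.trunc (2 * lam * m%:R)).+1.
Definition eta : R := delta / m%:R.

Definition gcenter (b : 'rV[R]_m) (q : {ffun 'I_m -> 'I_gT}) : 'rV[R]_m :=
  \row_j (b 0 j - lam * delta + (q j)%:R * eta).

Lemma grid (b z : 'rV[R]_m) : (forall j, `|z 0 j - b 0 j| <= lam * delta) ->
  exists q, eucl_dist (gcenter b q) z <= delta.
Proof.
move=> Hz.
pose u j := (z 0 j - b 0 j + lam * delta) / eta.
have Hu j : 0 <= u j <= 2 * lam * m%:R.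
  have m0 : (0 < m)%N by case: j => /= j jm; apply: leq_ltn_trans jm.
  have eta0 : 0 < eta by rewrite /eta divr_gt0 // ltr0n.
  have := Hz j; rewrite ler_norml => /andP[h1 h2].
  rewrite /u; apply/andP; split.
    by apply: divr_ge0; [lra | exact: ltW].
  rewrite ler_pdivrMr // /eta.
  have mn0 : (m%:R : R) != 0 by rewrite pnatr_eq0 -lt0n.
  have -> : 2 * lam * m%:R * (delta / m%:R) = 2 * lam * delta by field.
  lra.
have Hq j : (Num.trunc (u j) < gT)%N.
  by rewrite ltnS; apply: le_truncn; have /andP[_ ->] := Hu j.
exists [ffun j => Ordinal (Hq j)].
rewrite /eucl_dist; apply: (le_trans (eucl_le_l1 _)).
apply: (@le_trans _ _ (m%:R * eta)); last first.
  case: (posnP m) => [-> | mp]; first by rewrite mul0r ltW.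
  by rewrite /eta mulrC -mulrA mulVf ?mulr1 // pnatr_eq0 -lt0n.
apply: l1_bound => j; rewrite !mxE ffunE /=.
have m0 : (0 < m)%N by case: j => /= j jm; apply: leq_ltn_trans jm.
have eta0 : 0 < eta by rewrite /eta divr_gt0 // ltr0n.
have Eu : z 0 j = u j * eta - lam * delta + b 0 j.
  rewrite /u -mulrA mulVf ?mulr1 ?gt_eqF //; ring.
have /andP[t1 t2] := truncn_itv (proj1 (andP (Hu j))).
rewrite Eu.
have -> : b 0 j - lam * delta + (Num.trunc (u j))%:R * eta - (u j * eta - lam * delta + b 0 j)
   = ((Num.trunc (u j))%:R - u j) * eta by ring.
rewrite normrM (gtr0_norm eta0) ler_piMl //; first exact: ltW eta0.
rewrite ler_norml; apply/andP; split; rewrite -?natr1 in t2; lra.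
Qed.
End Grid.

Section Main.
Variable R : realType.
Variable k : nat.
Variables (f : 'rV[R]_k -> R) (K : R) (E : set 'rV[R]_(k + 1)) (M : nat) (delta : R).
Hypotheses (Cf : C2 f) (fK : C2norm f <= K) (EG : E `<=` graphf f)
  (EM : (E #= `I_M)%card) (d0 : 0 < delta).

Let P := @projf R k @` E.

Lemma graph_pt e : E e -> cube (lsubmx e) /\ e = row_mx (lsubmx e) (\row_(j < 1) f (lsubmx e)).
Proof. by move=> /EG [x cx <-]; rewrite /projf row_mxKl. Qed.

Lemma lipK x y : cube x -> cube y -> `|f y - f x| <= `|K| * l1 (y - x).
Proof.
move=> cx cy; apply: (le_trans (lip Cf fK cx cy)); apply: ler_wpM2r.
  exact: l1_ge0.
exact: ler_norm.
Qed.

Lemma covE_ex (A : set 'rV[R]_(k + 1)) : A `<=` E -> exists N, cover_by setT (@eucl_dist R _) A delta N.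
Proof.
move=> AE.
have dd (a : 'rV[R]_(k + 1)) : eucl_dist a a <= delta.
  by rewrite /eucl_dist subrr /eucl_norm big1 ?sqrtr0 ?ltW // => i _; rewrite mxE expr0n.
have [c [_ Hc]] := finite_cover (X := setT) (d := @eucl_dist R _) EM (fun _ _ => I) dd.
by exists M, c; split => // a /AE /Hc.
Qed.

Lemma P_ex (A : set 'rV[R]_k) : A `<=` P -> exists N, cover_by setT (@eucl_dist R _) A delta N.
Proof.
move=> AP; have [N [c [_ Hc]]] := covE_ex (A := E) (fun _ h => h).
exists N, (fun i => lsubmx (c i)); split => // a /AP [e Ee <-].
have [i Hi] := Hc e Ee; exists i; apply: le_trans Hi.
by rewrite /eucl_dist /projf -linearB; exact: eucl_lsub.
Qed.

Definition lamA : R := 1 + 2 * k%:R * `|K|.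
Definition cA : nat := (gT (k + 1) lamA) ^ (k + 1).

Lemma covA :
  covnum setT (@eucl_dist R _) E delta <= cA%:R * covnum setT (@eucl_dist R _) P delta.
Proof.
have [N0 HN0] := P_ex (fun _ h => h).
have cA0 : 0 < (cA%:R : R) by rewrite ltr0n expn_gt0.
rewrite mulrC -ler_pdivrMr //.
apply: covnum_ge; first by exists N0.
move=> N [cP [_ HcP]].
rewrite ler_pdivrMr // -natrM; apply: covnum_le.
have lam0 : 0 <= lamA by rewrite /lamA; apply: addr_ge0 => //; apply: mulr_ge0 => //; apply: mulr_ge0.
pose good (i : 'I_N) e := E e /\ eucl_dist (cP i) (lsubmx e) <= delta.
pose b (i : 'I_N) : 'rV[R]_(k + 1) := match pselect (exists e, good i e) with
   | left H => row_mx (cP i) (rsubmx (projT1 (cid H))) | right _ => 0 end.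
have := @cover_fin R _ setT (@eucl_dist R _) E delta
   ('I_N * {ffun 'I_(k + 1) -> 'I_(gT (k + 1) lamA)})%type
   (fun iq => @gcenter R (k + 1) lamA delta (b iq.1) iq.2) (fun _ => I).
rewrite card_prod card_ffun !card_ord /cA; apply => e Ee.
have Pe : P (lsubmx e) by exists e.
have [i Hi] := HcP _ Pe.
have Hb : forall j, `|e 0 j - b i 0 j| <= lamA * delta.
  rewrite /b; case: pselect => [H|]; last by move=> nH; exfalso; apply: nH; exists e.
  have [Ee' He'] := projT2 (cid H); set e' := projT1 (cid H) in Ee' He' *.
  have [ce Ge] := graph_pt Ee; have [ce' Ge'] := graph_pt Ee'.
  have dl j' : `|lsubmx e 0 j' - cP i 0 j'| <= delta.
    rewrite distrC; have := coord_le_eucl (cP i - lsubmx e) j'; rewrite !mxE => h.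
    exact: le_trans h Hi.
  have dl' j' : `|lsubmx e' 0 j' - cP i 0 j'| <= delta.
    rewrite distrC; have := coord_le_eucl (cP i - lsubmx e') j'; rewrite !mxE => h.
    exact: le_trans h He'.
  move=> j; case: (split_ordP j) => j' ->.
    rewrite row_mxEl; have -> : e 0 (lshift 1 j') = lsubmx e 0 j' by rewrite mxE.
    apply: (le_trans (dl j')); rewrite /lamA.
    have : 0 <= 2 * k%:R * `|K| by apply: mulr_ge0 => //; apply: mulr_ge0.
    move=> h; rewrite mulrDl mul1r lerDl; apply: mulr_ge0 => //; exact: ltW.
  rewrite row_mxEr; have -> : e 0 (rshift k j') = rsubmx e 0 j' by rewrite mxE.
  rewrite Ge Ge' !row_mxKr !mxE.
  apply: (le_trans (lipK ce' ce)).
  have : l1 (lsubmx e - lsubmx e') <= k%:R * (2 * delta).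
    apply: l1_bound => j2; rewrite mxE.
    have := dl j2; have := dl' j2; rewrite !ler_norml => /andP[a1 a2] /andP[b1 b2].
    rewrite !mxE in a1 a2 b1 b2 *; apply/andP; split; lra.
  move=> hl; apply: (le_trans (ler_wpM2l (normr_ge0 K) hl)).
  rewrite /lamA.
  have -> : (1 + 2 * k%:R * `|K|) * delta = delta + `|K| * (k%:R * (2 * delta)) by ring.
  by rewrite addrC lerDl ltW.
have [q Hq] := @grid R (k + 1) lamA delta d0 (b i) e Hb.
by exists (i, q).
Qed.

Definition lamB : R := 1 + k%:R * (1 + 2 * `|K|).

Lemma covB x r : delta <= r -> exists w,
  covnum setT (@eucl_dist R _) (P `&` dcball (@eucl_dist R _) x r) delta <=
  covnum setT (@eucl_dist R _) (E `&` dcball (@eucl_dist R _) w (lamB * r)) delta.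
Proof.
move=> dr; have r0 : 0 < r by exact: lt_le_trans dr.
case: (pselect (exists e, E e /\ eucl_dist x (lsubmx e) <= r)) => [[e0 [Ee0 He0]] | nH]; last first.
  exists 0; apply: (@le_trans _ _ 0%:R).
    apply: covnum_le; exists (fun=> 0); split => // a [[e Ee <-] Ha].
    by exfalso; apply: nH; exists e.
  by apply: covnum_ge0; apply: covE_ex => a [].
exists (row_mx x (\row_(j < 1) f (lsubmx e0))).
apply: covnum_ge; first by apply: covE_ex => a [].
move=> N [cE [_ HcE]]; apply: covnum_le.
exists (fun i => lsubmx (cE i)); split => // p [[e Ee <-] Hp].
have [cp Ge] := graph_pt Ee; have [cp0 Ge0] := graph_pt Ee0.
have Hx j : `|x 0 j - lsubmx e 0 j| <= r.
  by have := coord_le_eucl (x - lsubmx e) j; rewrite !mxE => h; exact: le_trans h Hp.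
have Hx0 j : `|x 0 j - lsubmx e0 0 j| <= r.
  by have := coord_le_eucl (x - lsubmx e0) j; rewrite !mxE => h; exact: le_trans h He0.
have Hw : eucl_dist (row_mx x (\row_(j < 1) f (lsubmx e0))) e <= lamB * r.
  rewrite /eucl_dist; apply: (le_trans (eucl_le_l1 _)).
  have -> : row_mx x (\row_(j < 1) f (lsubmx e0)) - e =
      row_mx (x - lsubmx e) (\row_(j < 1) (f (lsubmx e0) - f (lsubmx e))).
    rewrite {1}Ge opp_row_mx add_row_mx; congr row_mx; apply/rowP => j; rewrite !mxE //.
  rewrite l1_row_mx mxE.
  have h1 : l1 (x - lsubmx e) <= k%:R * r by apply: l1_bound => j; have := Hx j; rewrite !mxE => hh; exact: hh.
  have h2 : l1 (lsubmx e0 - lsubmx e) <= k%:R * (2 * r).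
    apply: l1_bound => j; have := Hx j; have := Hx0 j; rewrite !ler_norml.
    move=> /andP[a1 a2] /andP[b1 b2]; rewrite !mxE in a1 a2 b1 b2 *.
    apply/andP; split; lra.
  have h3 := lipK cp cp0.
  have h4 : `|K| * l1 (lsubmx e0 - lsubmx e) <= `|K| * (k%:R * (2 * r)).
    by apply: ler_wpM2l => //; exact: h2.
  have -> : lamB * r = r + (k%:R * r + `|K| * (k%:R * (2 * r))) by rewrite /lamB; ring.
  apply: (le_trans (lerD h1 (le_trans h3 h4))).
  by rewrite lerDr ltW.
have [i Hi] := HcE e (conj Ee Hw).
exists i; apply: le_trans Hi.
by rewrite /eucl_dist -linearB; exact: eucl_lsub.
Qed.

Lemma P_bounded : dbounded (@eucl_dist R _) P.
Proof.
exists 0, (k%:R * 1); move=> p [e Ee <-]; rewrite /dcball /=.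
have [cp _] := graph_pt Ee.
rewrite /eucl_dist; apply: (le_trans (eucl_le_l1 _)); apply: l1_bound => j.
rewrite !mxE sub0r normrN; have /andP[h1 h2] := cp j.
rewrite /projf !mxE in h1 h2 *; rewrite ger0_norm //.
Qed.

End Main.

Section NumFacts.
Variable R : realType.

Lemma delta_pow (eps delta A : R) : 0 < eps -> eps = (A + 2)^-1 ->
  0 < delta -> delta <= expR (- eps^-2) / 2 -> A <= delta `^ (- eps).
Proof.
move=> e0 eA d0 dd.
have ed : delta <= expR (- eps^-2).
  apply: (le_trans dd); rewrite ler_pdivrMr //; have := expR_gt0 (- eps^-2); lra.
have h1 : delta `^ eps <= expR (- eps^-1).
  have -> : - eps^-1 = - eps^-2 * eps by field; rewrite lt0r_neq0.
  rewrite expRM; apply: ge0_ler_powR => //; first exact: ltW.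
    by rewrite nnegrE ltW.
  by rewrite nnegrE expR_ge0.
rewrite powRN.
have h2 : expR (eps^-1) <= (delta `^ eps)^-1.
  rewrite -[expR _]invrK -expRN lef_pV2 ?posrE ?expR_gt0 ?powR_gt0 //.
have h3 := expR_ge1Dx (eps^-1).
rewrite eA invrK in h3; apply: (le_trans _ h2); rewrite eA invrK; lra.
Qed.

End NumFacts.

Unset Implicit Arguments.
Theorem lemma4p2 (R : realType) :
  exists delta0 : R -> R,
  forall (n : nat) (K s : R), (3 <= n)%N -> 0 < s <= 1 ->
  exists eps : R, 0 < eps <= 2^-1 /\ 0 < delta0 eps <= 2^-1 /\
  forall (t delta : R), 0 < t <= s -> 0 < delta <= delta0 eps ->
  forall (F : set ('rV[R]_(n.-1) -> R)) (m : nat) (D : R) (alpha : R -> R),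
    F `<=` @C2X R n.-1 ->
    (F #= `I_m)%card ->
    dseparated (@C2dist R n.-1) F delta ->
    cinematic F K D alpha ->
    dsC_set (@C2X R n.-1) (@C2dist R n.-1) F delta t (delta `^ (- (2 * eps))) ->
    2^-1 * delta `^ (2 * eps - t) <= m%:R <= delta `^ (- t) ->
    (forall f, F f -> C2norm f <= K) ->
  forall (E : ('rV[R]_(n.-1) -> R) -> set 'rV[R]_(n.-1 + 1)) (M : nat),
    (forall f, F f ->
       [/\ E f `<=` graphf f,
           (E f #= `I_M)%card,
           dseparated (@eucl_dist R _) (E f) delta &
           dsC_set setT (@eucl_dist R _) (E f) delta (n%:R - 2 + s)
                   (delta `^ (- (2 * eps)))]) ->
    delta `^ (2 * eps - (n%:R - 2 + s)) <= M%:R <= delta `^ (- (n%:R - 2 + s)) ->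
  forall f, F f ->
    dsC_set setT (@eucl_dist R _) (@projf R n.-1 @` E f) delta (n%:R - 2 + s)
            (delta `^ (- (3 * eps))).
Proof.
exists (fun eps => expR (- eps^-2) / 2).
move=> n K s n3 /andP[s0 s1].
pose k := n.-1.
have lam1 : 1 <= @lamB R k K.
  rewrite /lamB lerDl; apply: mulr_ge0 => //; apply: addr_ge0 => //; apply: mulr_ge0 => //.
pose A : R := @lamB R k K ^+ k * (@cA R k K)%:R.
have A0 : 0 <= A.
  apply: mulr_ge0 => //; apply: exprn_ge0; exact: le_trans lam1.
exists ((A + 2)^-1); split.
  apply/andP; split; first by rewrite invr_gt0; lra.
  rewrite lef_pV2 ?posrE; lra.
split.
  apply/andP; split; first by apply: divr_gt0 => //; exact: expR_gt0.
  have : expR (- (A + 2)^-1^-2) <= 1.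
    rewrite expR_le1 oppr_le0 invr_ge0; apply: exprn_ge0; rewrite invr_ge0; lra.
  lra.
move=> t delta /andP[t0 ts] /andP[d0 dd] F m D alpha FC2 Fm Fsep Fcin Fds mb FK E M HE Mb f Ff.
have [EG EM Esep Eds] := HE f Ff.
have [Cf _] := FC2 f Ff; have fK := FK f Ff.
split => //; split; first exact: (P_bounded EG).
move=> x r _ dr.
have r0 : 0 < r by exact: lt_le_trans dr.
have [w Hw] := covB Cf fK EG EM d0 x dr.
have dr' : delta <= @lamB R k K * r.
  apply: (le_trans dr); rewrite ler_peMl //; exact: ltW.
have [_ [_ HEd]] := Eds.
have H1 := HEd w (@lamB R k K * r) I dr'.
have H2 := covA Cf fK EG EM d0.
have cP0 : 0 <= covnum setT (@eucl_dist R _) (@projf R k @` E f) delta.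
  by apply: covnum_ge0; apply: (P_ex EM d0) => a.
apply: (le_trans Hw); apply: (le_trans H1).
rewrite powRM; last 2 first.
  exact: le_trans lam1.
  exact: ltW.
have Hs : n%:R - 2 + s <= k%:R.
  have hn : n = k.+1 by rewrite /k prednK // (leq_trans _ n3).
  have -> : (n%:R : R) = k%:R + 1 by rewrite hn -natr1.
  lra.
have hl : @lamB R k K `^ (n%:R - 2 + s) <= @lamB R k K ^+ k.
  by rewrite -powR_mulrn ?(le_trans _ lam1) //; apply: ler_powR.
have e0 : 0 < (A + 2)^-1 by rewrite invr_gt0; lra.
have hA := delta_pow e0 erefl d0 dd.
have e3 : delta `^ (- (3 * (A + 2)^-1)) =
    delta `^ (- (2 * (A + 2)^-1)) * delta `^ (- (A + 2)^-1).
  rewrite -powRD; first by congr (_ `^ _); ring.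
  by apply/implyP => _; rewrite lt0r_neq0.
have D2 : 0 <= delta `^ (- (2 * (A + 2)^-1)) by exact: powR_ge0.
have Rs : 0 <= r `^ (n%:R - 2 + s) by exact: powR_ge0.
have Ls : 0 <= @lamB R k K `^ (n%:R - 2 + s) by exact: powR_ge0.
apply: (le_trans (ler_wpM2l _ H2)).
  by apply: mulr_ge0 => //; apply: mulr_ge0.
have hc : @lamB R k K `^ (n%:R - 2 + s) * (@cA R k K)%:R <= delta `^ (- (A + 2)^-1).
  by apply: le_trans hA; apply: ler_wpM2r.
rewrite e3.
set a := delta `^ (- (2 * (A + 2)^-1)).
set L := @lamB R k K `^ (n%:R - 2 + s).
set rho := r `^ (n%:R - 2 + s).
set c := ((@cA R k K)%:R : R).
set p := covnum _ _ _ _.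
set D1 := delta `^ (- (A + 2)^-1).
have -> : a * (L * rho) * (c * p) = (a * rho * p) * (L * c) by ring.
have -> : a * D1 * rho * p = (a * rho * p) * D1 by ring.
by apply: ler_wpM2l => //; apply: mulr_ge0 => //; apply: mulr_ge0.
Qed.
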